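(* Assume $u\circ\Phi_C\in\mathcal{L}^1(\Omega,\mathcal{S},\pi)$ for all $C\in\mathcal{C}$ and all $u\in\mathcal{U}_{\mathcal{P}}$. Let $T_1,\dots,T_s$ be i.i.d. copies of $T$ and let $0\le\varepsilon_1\le\varepsilon_2\le 1$. Then (i) $\mathrm{gsd}(\mathcal{C})\subseteq\mathrm{par}(\Phi)$; (ii) for every $\omega\in\Omega$, $$\mathrm{egsd}^{\varepsilon_2}_s(\mathcal{C})(\omega)\subseteq\mathrm{egsd}^{\varepsilon_1}_s(\mathcal{C})(\omega)\subseteq\mathrm{par}\bigl(\Phi,\{T_1(\omega),\dots,T_s(\omega)\}\bigr).$$
   Context: Setting. $\mathcal{C}$ is a finite set (of classifiers), $\mathcal{D}$ a nonempty set (of data sets), $n\ge 1$, $0\le z\le n$, and $\Phi=(\phi_1,\dots,\phi_n):\mathcal{C}\times\mathcal{D}\to[0,1]^n$; the first $z$ coordinates are regarded as cardinal, the remaining ones as ordinal. Preference systems. A preference system is a triple $\mathcal{A}=[A,R_1,R_2]$ with $A\neq\emptyset$, $R_1\subseteq A\times A$ a preorder (reflexive, transitive) and $R_2\subseteq R_1\times R_1$ a preorder on $R_1$. For a preorder $R$, its strict part is $P_R=\{(a,b):(a,b)\in R,(b,a)\notin R\}$ and its indifference part is $I_R=\{(a,b):(a,b)\in R,(b,a)\in R\}$. A representation of $\mathcal{A}$ is a map $u:A\to\mathbb{R}$ such that for all $a,b,c,d\in A$: (i) $(a,b)\in R_1\Rightarrow u(a)\ge u(b)$, with equality iff $(a,b)\in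 I_{R_1}$; (ii) $((a,b),(c,d))\in R_2\Rightarrow u(a)-u(b)\ge u(c)-u(d)$, with equality iff $((a,b),(c,d))\in I_{R_2}$. $\mathcal{U}_{\mathcal{A}}$ denotes the set of all representations; $\mathcal{A}$ is consistent if $\mathcal{U}_{\mathcal{A}}\neq\emptyset$. The restriction of $\mathcal{A}$ to $A'\subseteq A$ is $[A',R_1',R_2']$ with $R_1'=R_1\cap(A'\times A')$ and $R_2'=R_2\cap(R_1'\times R_1')$. The system $\mathcal{P}=[[0,1]^n,R_1^*,R_2^*]$: $R_1^*=\{(x,y): x_j\ge y_j\ \forall j\le n\}$ and $R_2^*=\{((x,y),(x',y')): x_j-y_j\ge x_j'-y_j'\ \forall j\le z,\ \ x_j\ge x_j'\ge y_j'\ge y_j\ \forall j>z\}$ (with $(x,y),(x',y')\in R_1^*$). $\mathcal{P}_\Phi$ is the restriction of $\mathcal{P}$ to $\Phi(\mathcal{C}\times\mathcal{D})$. GSD order. $(\Omega,\mathcal{S},\pi)$ is a probability space, $T:\Omega\to\mathcal{D}$ a random variable, and $\Phi_C:=\Phi(C,T(\cdot))$ for $C\in\mathcal{C}$. For $C,C'\in\mathcal{C}$, $C\succsim C'$ iff $\mathbb{E}_\pi(u\circ\Phi_C)\ge\mathbb{E}_\pi(u\circ\Phi_{C'})$ for all $u\in\mathcal{U}_{\mathcal{P}_\Phi}$; $\succ$ is the strict part of $\succsim$. The GSD-front is $\mathrm{gsd}(\mathcal{C})=\{C\in\mathcal{C}:\nexists C'\in\mathcal{C}\text{ with } C'\succ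 C\}$. Empirical GSD-front. For $s\in\mathbb{N}$ and i.i.d. copies $T_1,\dots,T_s$ of $T$, let $Z_s=\{\Phi(C,T_i): i\le s, C\in\mathcal{C}\}$, let $\mathcal{W}_s$ be the restriction of $\mathcal{P}$ to $Z_s$, and for $M\subseteq[0,1]^n$ let $\hat\pi_C(M)=\frac1s|\{i\le s:\Phi(C,T_i)\in M\}|$. Define $d_s(C,C')=\inf_{u\in\mathcal{U}_{\mathcal{W}_s}}\sum_{z\in Z_s}u(z)\bigl(\hat\pi_C(\{z\})-\hat\pi_{C'}(\{z\})\bigr)$. For $\varepsilon\in[0,1]$, the $\varepsilon$-empirical GSD-front is $\mathrm{egsd}^{\varepsilon}_s(\mathcal{C})=\{C\in\mathcal{C}:\nexists C'\in\mathcal{C}\text{ with } d_s(C',C)\ge-\varepsilon\text{ and } d_s(C,C')<0\}$ (a random set, evaluated pointwise in $\omega$). Pareto front. Let $\gtrdot$ be the strict part of the componentwise order $\ge$ on $\mathbb{R}^n$ (i.e. $x\gtrdot y$ iff $x_j\ge y_j$ for all $j$ and $x\ne y$). For $\tilde{\mathcal{D}}\subseteq\mathcal{D}$, $\mathrm{par}(\Phi,\tilde{\mathcal{D}})=\{C\in\mathcal{C}:\nexists C'\in\mathcal{C}\text{ such that }\Phi(C',D)\gtrdot\Phi(C,D)\text{ for all }D\in\tilde{\mathcal{D}}\}$, and $\mathrm{par}(\Phi):=\mathrm{par}(\Phi,\mathcal{D})$. *)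

(* Defs.v *)
From HB Require Import structures.
From mathcomp Require Import all_boot all_order all_algebra.
From mathcomp Require Import all_classical all_reals all_analysis.
Set Implicit Arguments. Unset Strict Implicit. Unset Printing Implicit Defensive.
Import Order.TTheory GRing.Theory Num.Theory.
Local Open Scope classical_set_scope.
Local Open Scope ring_scope.

Section PrefSystems.
Variable R : realType.

(* Representation of the restriction of a preference system [V, R1, R2]
   to A : set V (R2 : a relation on pairs of R1-related pairs, given
   curried as R2 a b c d  <->  ((a,b),(c,d)) in R2).  Maps are total V -> R;
   only their values on A matter. *)
Definition is_representation {V : Type} (A : set V) (R1 : V -> V -> Prop)
  (R2 : V -> V -> V -> V -> Prop) (u : V -> R) : Prop :=
  (forall a b, A a -> A b -> R1 a b -> u b <= u a /\ (u a = u b <-> R1 b a)) /\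
  (forall a b c d, A a -> A b -> A c -> A d -> R1 a b -> R1 c d -> R2 a b c d ->
     u c - u d <= u a - u b /\ (u a - u b = u c - u d <-> R2 c d a b)).

Variable n : nat.
Local Notation vec := {ffun 'I_n -> R}.

Definition unit_cube : set vec := [set x | forall j, 0 <= x j <= 1].

Definition R1star (x y : vec) : Prop := forall j, y j <= x j.

(* R_2^* ; coordinates j < z are cardinal, j >= z ordinal (0-indexed) *)
Definition R2star (z : nat) (x y x' y' : vec) : Prop :=
  R1star x y /\ R1star x' y' /\
  (forall j : 'I_n, (j < z)%N -> x' j - y' j <= x j - y j) /\
  (forall j : 'I_n, (z <= j)%N -> x' j <= x j /\ y' j <= x' j /\ y j <= y' j).

Definition strict_dom (x y : vec) : Prop := R1star x y /\ x <> y.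

Section Classifiers.
Variables (Cty : finType) (D : Type) (Phi : Cty -> D -> vec).

Definition Phi_image : set vec := [set x | exists c t, Phi c t = x].

Definition par (Dt : set D) : set Cty :=
  [set c | ~ exists c' : Cty, forall t, Dt t -> strict_dom (Phi c' t) (Phi c t)].

Section GSD.
Variables (dO : measure_display) (Omega : measurableType dO)
  (P : probability Omega R) (z : nat) (T : Omega -> D).

Definition expect_u (u : vec -> R) (c : Cty) : \bar R :=
  (\int[P]_w (u (Phi c (T w)))%:E)%E.

Definition gsd_ge (c c' : Cty) : Prop :=
  forall u, is_representation Phi_image R1star (R2star z) u ->
    (expect_u u c' <= expect_u u c)%E.

Definition gsd_gt (c c' : Cty) : Prop := gsd_ge c c' /\ ~ gsd_ge c' c.

Definition gsd_front : set Cty := [set c | ~ exists c', gsd_gt c' c].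
End GSD.

Section Empirical.
Variables (Omega : Type) (z s : nat) (Ts : 'I_s -> Omega -> D).

Definition Zs (w : Omega) : seq vec :=
  undup [seq Phi c (Ts i w) | i <- enum 'I_s, c <- enum Cty].

Definition pihat (w : Omega) (c : Cty) (x : vec) : R :=
  #|[set i : 'I_s | Phi c (Ts i w) == x]|%:R / s%:R.

Definition d_s (w : Omega) (c c' : Cty) : \bar R :=
  ereal_inf [set (\sum_(x <- Zs w) u x * (pihat w c x - pihat w c' x))%:E
            | u in [set u | is_representation [set x | x \in Zs w] R1star (R2star z) u]].

Definition egsd (eps : R) (w : Omega) : set Cty :=
  [set c | ~ exists c', (- eps%:E <= d_s w c' c)%E /\ (d_s w c c' < 0)%E].
End Empirical.
End Classifiers.

(* Ts_1..Ts_s are i.i.d. copies of T: measurable, identically distributed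
   with T, and mutually independent (product rule; sub-families are covered
   by taking A i = setT). *)
Definition iid_copies {dO dD : measure_display} {Omega : measurableType dO}
  {D : measurableType dD} (P : probability Omega R) (T : Omega -> D) (s : nat)
  (Ts : 'I_s -> Omega -> D) : Prop :=
  (forall i, measurable_fun setT (Ts i)) /\
  (forall i (A : set D), measurable A -> P (Ts i @^-1` A) = P (T @^-1` A)) /\
  (forall A : 'I_s -> set D, (forall i, measurable (A i)) ->
     P (\bigcap_(i in [set: 'I_s]) (Ts i @^-1` A i)) =
     (\prod_(i < s) P (Ts i @^-1` A i))%E).
End PrefSystems.

(* Main.v *)
Require Import Defs.
From HB Require Import structures.
From mathcomp Require Import all_boot all_order all_algebra.
From mathcomp Require Import all_classical all_reals all_analysis.
From mathcomp Require Import lra.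
Import Order.TTheory GRing.Theory Num.Theory.
Local Open Scope classical_set_scope.
Local Open Scope ring_scope.

Lemma integral_mono_gen d (T : measurableType d) (R : realType)
  (mu : {measure set T -> \bar R}) (D : set T) (f g : T -> \bar R) :
  (forall x, (f x <= g x)%E) ->
  (\int[mu]_(x in D) f x <= \int[mu]_(x in D) g x)%E.
Proof.
move=> fg.
have pfg : forall x, ((f \_ D) x <= (g \_ D) x)%E.
  by move=> x; rewrite /patch; case: ifP.
rewrite /integral /=; apply: leeB.
  apply: le_ereal_sup => _ [h /= hf <-]; exists h => //= x.
  apply: le_trans (hf x) _; exact: (@funepos_le _ _ setT (f \_ D) (g \_ D) (fun x _ => pfg x) x (in_setT x)).
apply: le_ereal_sup => _ [h /= hf <-]; exists h => //= x.
apply: le_trans (hf x) _; exact: (@funeneg_le _ _ setT (f \_ D) (g \_ D) (fun x _ => pfg x) x (in_setT x)).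
Qed.

Definition usum (R : realType) (n : nat) (x : {ffun 'I_n -> R}) : R := \sum_j x j.
Arguments usum {R n}.

Lemma sum_le_eq (R : realType) (n : nat) (F G : 'I_n -> R) :
  (forall j, F j <= G j) -> \sum_j F j = \sum_j G j -> forall j, F j = G j.
Proof.
move=> FG E j.
have h : \sum_j (G j - F j) = 0 by rewrite sumrB E subrr.
have := @psumr_eq0P R _ xpredT (fun j => G j - F j).
move=> /(_ (fun i _ => ltac:(rewrite subr_ge0; exact: FG)) h j isT) /eqP.
by rewrite subr_eq0 => /eqP.
Qed.

Arguments sum_le_eq {R n F G}.

Lemma sum_le (R : realType) (n : nat) (F G : 'I_n -> R) :
  (forall j, F j <= G j) -> \sum_j F j <= \sum_j G j.
Proof. by move=> FG; apply: ler_sum => j _; exact: FG. Qed.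
Arguments sum_le {R n F G}.

Lemma usum_rep (R : realType) (n z : nat) (A : set {ffun 'I_n -> R}) :
  is_representation A (@R1star R n) (@R2star R n z) (@usum R n).
Proof.
split.
  move=> a b _ _ ab; split; first exact: sum_le.
  split.
    by move=> E j; rewrite (sum_le_eq ab (esym E) j).
  by move=> ba; apply/le_anti/andP; split; apply: sum_le.
move=> a b c d _ _ _ _ ab cd [_ [_ [Hc Ho]]].
have key : forall j, c j - d j <= a j - b j.
  move=> j; case: (ltnP j z) => jz; first exact: Hc.
  by have [h1 [h2 h3]] := Ho j jz; lra.
rewrite /usum -!sumrB; split; first exact: sum_le.
split.
  move=> E; have {}E := sum_le_eq key (esym E).
  split=> //; split=> //; split.
    by move=> j _; rewrite E.
  move=> j jz; have [h1 [h2 h3]] := Ho j jz; have := E j; have := ab j; have := cd j.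
  move=> e1 e2 e3; lra.
move=> [_ [_ [Hc' Ho']]]; apply/le_anti/andP; split; apply: sum_le => // j.
case: (ltnP j z) => jz; first exact: Hc'.
by have [h1 [h2 h3]] := Ho' j jz; lra.
Qed.

Lemma sum_count (R : realType) (V : eqType) (I : finType) (L : seq V)
  (f : I -> V) (u : V -> R) :
  uniq L -> (forall i, f i \in L) ->
  \sum_(x <- L) u x * #|[set i | f i == x]|%:R = \sum_i u (f i).
Proof.
move=> uL fL.
have cE : forall x, #|[set i | f i == x]| = #|[pred i | f i == x]|.
  move=> x; apply: eq_card => i; apply/idP/idP.
    by move/set_mem.
  by move=> h; apply/mem_set.
rewrite (eq_bigr (fun x => \sum_(i | f i == x) u x)); last first.
  move=> x _; rewrite cE -sum1_card natr_sum mulr_sumr.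
  by apply: eq_big => [i|i _]; rewrite ?inE ?mulr1.
rewrite (exchange_big_dep xpredT) //=.
apply: eq_bigr => i _.
rewrite -big_filter.
have -> : [seq x <- L | f i == x] = [:: f i].
  by rewrite -(filter_pred1_uniq uL (fL i)); apply: eq_filter => x /=; rewrite eq_sym.
by rewrite big_seq1.
Qed.

Lemma strict_lt (R : realType) (n : nat) (x y : {ffun 'I_n -> R}) :
  strict_dom x y -> usum y < usum x.
Proof.
move=> [xy nxy]; rewrite lt_neqAle sum_le // andbT.
apply/eqP => E; apply: nxy; apply/ffunP => j.
by rewrite (sum_le_eq xy E j).
Qed.

Lemma ds_sum (R : realType) (n : nat) (Cty : finType) (D : Type)
  (Phi : Cty -> D -> {ffun 'I_n -> R}) (Omega : Type) (s : nat)
  (Ts : 'I_s -> Omega -> D) (w : Omega) (c c' : Cty) (u : {ffun 'I_n -> R} -> R) :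
  \sum_(x <- Zs Phi Ts w) u x * (pihat Phi Ts w c x - pihat Phi Ts w c' x) =
  (\sum_i (u (Phi c (Ts i w)) - u (Phi c' (Ts i w)))) / s%:R.
Proof.
have mem : forall c0 i, Phi c0 (Ts i w) \in Zs Phi Ts w.
  move=> c0 i; rewrite mem_undup.
  by apply: (allpairs_f (fun i c => Phi c (Ts i w))); rewrite mem_enum.
have uZ : uniq (Zs Phi Ts w) by exact: undup_uniq.
rewrite /pihat.
under eq_bigr do rewrite mulrBr !mulrA.
rewrite sumrB -!mulr_suml.
rewrite (@sum_count _ _ _ _ _ u uZ (mem c)) (@sum_count _ _ _ _ _ u uZ (mem c')).
by rewrite -mulrBl sumrB.
Qed.

Theorem theorem2 (R : realType) (Cty : finType)
  (dD : measure_display) (D : measurableType dD)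
  (n z : nat) (Phi : Cty -> D -> {ffun 'I_n -> R})
  (dO : measure_display) (Omega : measurableType dO) (P : probability Omega R)
  (T : Omega -> D) (s : nat) (Ts : 'I_s -> Omega -> D) (eps1 eps2 : R) :
  inhabited D ->
  (z <= n)%N ->
  (forall c t j, 0 <= Phi c t j <= 1) ->
  measurable_fun setT T ->
  (forall (c : Cty) (u : {ffun 'I_n -> R} -> R),
     is_representation (@unit_cube R n) (@R1star R n) (@R2star R n z) u ->
     P.-integrable setT (fun w => (u (Phi c (T w)))%:E)) ->
  (0 < s)%N ->
  iid_copies P T Ts ->
  0 <= eps1 -> eps1 <= eps2 -> eps2 <= 1 ->
  gsd_front Phi P z T `<=` par Phi setT /\
  (forall w : Omega,
     egsd Phi z Ts eps2 w `<=` egsd Phi z Ts eps1 w /\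
     egsd Phi z Ts eps1 w `<=` par Phi [set Ts i w | i in [set: 'I_s]]).
Proof.
move=> _ _ _ _ Hint s0 _ e10 e12 _; split.
  move=> c Hc [c' Hdom]; apply: Hc; exists c'; split.
    move=> u urep; rewrite /expect_u; apply: integral_mono_gen => w.
    rewrite lee_fin.
    have [h _] := urep.1 (Phi c' (T w)) (Phi c (T w)) (ex_intro _ c' (ex_intro _ (T w) erefl))
      (ex_intro _ c (ex_intro _ (T w) erefl)) (Hdom (T w) I).1.
    exact: h.
  move=> H; have := H usum (usum_rep _ _ _ _); rewrite /expect_u.
  have iF := Hint c usum (usum_rep _ _ _ _).
  have iG := Hint c' usum (usum_rep _ _ _ _).
  rewrite -sube_le0 -(integralB_EFin measurableT iG iF) => Hle.
  set h := (fun w => _) in Hle.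
  have hpos : forall w, (0 < h w)%E.
    move=> w; rewrite /h lte_fin subr_gt0; exact: strict_lt (Hdom (T w) I).
  have h0 : (\int[P]_(x in setT) h x = 0)%E.
    by apply/le_anti; rewrite Hle integral_ge0 // => w _; exact: ltW.
  have mh := emeasurable_funB (measurable_int _ iG) (measurable_int _ iF).
  have habs : (\int[P]_(x in setT) `|h x| = 0)%E.
    rewrite -h0; apply: eq_integral => w _; rewrite gee0_abs //; exact: ltW.
  have := (ae_eq_integral_abs P measurableT mh).1 habs.
  case=> N [mN PN0 sub].
  have eN : N = setT.
    apply/seteqP; split => // w _; apply: sub => /= hw.
    have hh : h w = 0 by exact: hw.
    by move: (hpos w); rewrite hh ltxx.
  have := probability_setT P; rewrite -eN PN0 => /eqP; rewrite eqe eq_sym oner_eq0.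
  by [].
move=> w; split.
  move=> c Hc [c' [h1 h2]]; apply: Hc; exists c'; split => //.
  by apply: le_trans h1; rewrite leeN2 lee_fin.
move=> c Hc [c' Hdom]; apply: Hc; exists c'.
have Hd : forall i, strict_dom (Phi c' (Ts i w)) (Phi c (Ts i w)).
  by move=> i; apply: Hdom; exists i.
have mem : forall c0 i, Phi c0 (Ts i w) \in Zs Phi Ts w.
  move=> c0 i; rewrite mem_undup.
  by apply: (allpairs_f (fun i c => Phi c (Ts i w))); rewrite mem_enum.
split.
  apply: (@le_trans _ _ 0%E); first by rewrite leeNl oppe0 lee_fin.
  apply/ereal_infP => _ [u urep <-]; rewrite lee_fin ds_sum.
  apply: divr_ge0 => //; apply: sumr_ge0 => i _; rewrite subr_ge0.
  have [h _] := urep.1 (Phi c' (Ts i w)) (Phi c (Ts i w)) (mem c' i) (mem c i) (Hd i).1.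
  exact: h.
apply: (@le_lt_trans _ _ (\sum_(x <- Zs Phi Ts w)
   usum x * (pihat Phi Ts w c x - pihat Phi Ts w c' x))%:E).
  apply: ge_ereal_inf; eexists => //; exists usum => //; exact: usum_rep.
rewrite lte_fin ds_sum pmulr_llt0 ?invr_gt0 ?ltr0n //.
rewrite (bigD1 (Ordinal s0)) //= -[ltRHS](addr0 0).
apply: ltr_leD.
  by rewrite subr_lt0; exact: strict_lt.
apply: sumr_le0 => i _; rewrite subr_le0; apply: ltW; exact: strict_lt.
Qed.
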